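(* Fix $l\in[r]$. Let $|\Psi_{l-1}\rangle=F_{\beta_{l-1}}(H)|\Psi\rangle/\|F_{\beta_{l-1}}(H)|\Psi\rangle\|$ and $|\Psi_l\rangle=F_{\beta_l}(H)|\Psi\rangle/\|F_{\beta_l}(H)|\Psi\rangle\|$ be the ideal input and output states of the $l$-th fragment, and let the actual input be $|\tilde\Psi_{l-1}\rangle=|\Psi_{l-1}\rangle+|\Xi_{l-1}\rangle$ with $\varepsilon_{l-1}:=\||\Xi_{l-1}\rangle\|$. Let $U$ be an $(\varepsilon'_l,\alpha_l)$-block-encoding of $F_{\Delta\beta_l}(H)$ with $\|\langle0|U|0\rangle-\alpha_lF_{\Delta\beta_l}(H)\|=\varepsilon'_l$, and write the actual post-selected output as $|\tilde\Psi_l\rangle=\frac{\langle0|U|0\rangle|\tilde\Psi_{l-1}\rangle}{\|\langle0|U|0\rangle|\tilde\Psi_{l-1}\rangle\|}=|\Psi_l\rangle+|\Xi_l\rangle$. If $\varepsilon_{l-1}+\varepsilon'_l\le\varepsilon_l\,\|\alpha_lF_{\Delta\beta_l}(H)|\Psi_{l-1}\rangle\|/2$ and $\varepsilon_l\ll1$, then $\||\Xi_l\rangle\|=\mathcal{O}(\varepsilon_l)$.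
   Context: $H$ is a Hamiltonian with $\|H\|\le1$ and smallest eigenvalue $\lambda_{\min}$; $F_b(H)=e^{-b(H-\lambda_{\min})}$. $|\Psi\rangle$ is a unit vector, $\Delta\beta_1,\dots,\Delta\beta_r>0$, $\beta_0=0$, $\beta_l=\sum_{k\le l}\Delta\beta_k$, $\alpha_l\in(0,1]$. A unitary $U$ on $\mathbb{H}_\mathcal{S}\otimes\mathbb{H}_\mathcal{A}$ is an $(\varepsilon,\alpha)$-block-encoding of $A$ if $\|\alpha A-\langle0|U|0\rangle\|\le\varepsilon$ for some $|0\rangle\in\mathbb{H}_\mathcal{A}$. *)

(* Defs.v *)
From HB Require Import structures.
From mathcomp Require Import all_boot all_order all_algebra.
From mathcomp Require Import complex.
From mathcomp Require Import all_classical all_reals.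
From mathcomp Require Import all_analysis.
Set Implicit Arguments. Unset Strict Implicit. Unset Printing Implicit Defensive.
Import Order.TTheory GRing.Theory Num.Theory.
Local Open Scope ring_scope.
Local Open Scope complex_scope.

Section QDefs.
Variable R : realType.
Local Notation C := R[i].

Definition vnorm n (x : 'cV[C]_n) : R :=
  Num.sqrt (\sum_i (complex.Re (x i 0) ^+ 2 + complex.Im (x i 0) ^+ 2)).

Definition opnorm m n (A : 'M[C]_(m, n)) : R :=
  sup [set vnorm (A *m x) | x in [set x : 'cV[C]_n | vnorm x = 1]]%classic.

Definition adj m n (A : 'M[C]_(m, n)) : 'M[C]_(n, m) := (map_mx conjc A)^T.

Definition unitary_mx n (V : 'M[C]_n) : Prop := adj V *m V = 1%:M.

Definition normalize n (x : 'cV[C]_n) : 'cV[C]_n := ((vnorm x)^-1)%:C *: x.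

(* Spectral functional calculus: for H = V diag(d) V^dagger,
   f(H) = V diag(f(d)) V^dagger. *)
Definition fcalc n (V : 'M[C]_n) (d : 'I_n -> R) (f : R -> R) : 'M[C]_n :=
  V *m diag_mx (\row_i (f (d i))%:C) *m adj V.

Definition Fb n (V : 'M[C]_n) (d : 'I_n -> R) (lmin b : R) : 'M[C]_n :=
  fcalc V d (fun x => expR (- (b * (x - lmin)))).

Definition beta (dbeta : nat -> R) (l : nat) : R := \sum_(1 <= k < l.+1) dbeta k.

(* The system-block <0| U |0> of a unitary U on H_S (x) H_A, H_S = C^n,
   H_A = C^m, the index (i,a) of H_S (x) H_A being mxvec_index i a. *)
Definition block n m (U : 'M[C]_(n * m)) (z : 'cV[C]_m) : 'M[C]_n :=
  \matrix_(i, j) \sum_a \sum_b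
     conjc (z a 0) * U (mxvec_index i a) (mxvec_index j b) * z b 0.

End QDefs.

(* Main.v *)
Require Import Defs.
From HB Require Import structures.
From mathcomp Require Import all_boot all_order all_algebra.
From mathcomp Require Import complex.
From mathcomp Require Import all_classical all_reals all_analysis.
From mathcomp Require Import ring lra.
Import Order.TTheory GRing.Theory Num.Theory.
Local Open Scope ring_scope.
Local Open Scope complex_scope.
Set Implicit Arguments. Unset Strict Implicit. Unset Printing Implicit Defensive.
Section S.
Variable R : realType.
Local Notation C := R[i].
Local Notation Re := complex.Re.
Local Notation Im := complex.Im.
Lemma ReM (a b : C) : Re (a * b) = Re a * Re b - Im a * Im b.
Proof. by case: a => a1 a2; case: b => b1 b2. Qed.
Lemma ImM (a b : C) : Im (a * b) = Re a * Im b + Im a * Re b.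
Proof. by case: a => a1 a2; case: b => b1 b2. Qed.
Lemma ReD (a b : C) : Re (a + b) = Re a + Re b.
Proof. by case: a => a1 a2; case: b => b1 b2. Qed.
Lemma ImD (a b : C) : Im (a + b) = Im a + Im b.
Proof. by case: a => a1 a2; case: b => b1 b2. Qed.
Lemma ReN (a : C) : Re (- a) = - Re a. Proof. by case: a. Qed.
Lemma ImN (a : C) : Im (- a) = - Im a. Proof. by case: a. Qed.
Lemma ReC (a : R) : Re (a%:C) = a. Proof. by []. Qed.
Lemma ImC (a : R) : Im (a%:C) = 0. Proof. by []. Qed.

Definition Q n (x : 'cV[C]_n) : R := \sum_(i < n) (Re (x i 0) ^+ 2 + Im (x i 0) ^+ 2).
Definition Sp n (x y : 'cV[C]_n) : R :=
  \sum_(i < n) (Re (x i 0) * Re (y i 0) + Im (x i 0) * Im (y i 0)).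

Lemma Q_ge0 n (x : 'cV[C]_n) : 0 <= Q x.
Proof. by apply: sumr_ge0 => i _; apply: addr_ge0; apply: sqr_ge0. Qed.

Lemma vnormE n (x : 'cV[C]_n) : vnorm x = Num.sqrt (Q x).
Proof. by []. Qed.

Lemma vnorm_ge0 n (x : 'cV[C]_n) : 0 <= vnorm x.
Proof. exact: sqrtr_ge0. Qed.

Lemma vnorm_sqr n (x : 'cV[C]_n) : vnorm x ^+ 2 = Q x.
Proof. by rewrite vnormE sqr_sqrtr // Q_ge0. Qed.

Lemma Q_eq0 n (x : 'cV[C]_n) : Q x = 0 -> x = 0.
Proof.
move/eqP; rewrite psumr_eq0 => [/allP H|i _]; last by apply: addr_ge0; apply: sqr_ge0.
apply/matrixP => i j; rewrite ord1 mxE.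
have := H i (mem_index_enum i); case: (x i 0) => a b /= /eqP E.
have ha : a = 0 by nra.
have hb : b = 0 by nra.
by rewrite ha hb.
Qed.

Lemma vnorm_eq0 n (x : 'cV[C]_n) : vnorm x = 0 -> x = 0.
Proof. by move=> h; apply: Q_eq0; rewrite -vnorm_sqr h expr0n. Qed.

Lemma Q0 n : Q (0 : 'cV[C]_n) = 0.
Proof. by rewrite /Q big1 // => i _; rewrite mxE /= expr0n addr0. Qed.

Lemma vnorm0 n : vnorm (0 : 'cV[C]_n) = 0.
Proof. by rewrite vnormE Q0 sqrtr0. Qed.

Lemma QD n (x y : 'cV[C]_n) : Q (x + y) = Q x + 2 * Sp x y + Q y.
Proof.
rewrite /Q /Sp mulr_sumr -!big_split /=; apply: eq_bigr => i _.
rewrite !mxE ReD ImD; ring.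
Qed.

Lemma QZ n (c : C) (x : 'cV[C]_n) : Q (c *: x) = (Re c ^+ 2 + Im c ^+ 2) * Q x.
Proof.
rewrite /Q mulr_sumr; apply: eq_bigr => i _.
rewrite !mxE ReM ImM; ring.
Qed.

Lemma SZ n (t : R) (x y : 'cV[C]_n) : Sp x (t%:C *: y) = t * Sp x y.
Proof.
rewrite /Sp mulr_sumr; apply: eq_bigr => i _.
rewrite !mxE ReM ImM ReC ImC; ring.
Qed.

Lemma S0 n (x : 'cV[C]_n) : Sp x 0 = 0.
Proof. by rewrite /Sp big1 // => i _; rewrite mxE /= !mulr0 addr0. Qed.

Lemma CS n (x y : 'cV[C]_n) : Sp x y ^+ 2 <= Q x * Q y.
Proof.
have [Qy0|Qy0] := eqVneq (Q y) 0.
  by rewrite (Q_eq0 Qy0) S0 expr0n /= mulr_ge0 // Q_ge0.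
have Qyp : 0 < Q y by rewrite lt0r Qy0 Q_ge0.
set t := - (Sp x y / Q y).
have h := Q_ge0 (x + t%:C *: y).
rewrite QD SZ QZ ReC ImC in h.
have e : Q y * (Q x + 2 * (t * Sp x y) + (t ^+ 2 + 0 ^+ 2) * Q y) = Q x * Q y - Sp x y ^+ 2.
  rewrite /t; field; exact: Qy0.
have : 0 <= Q y * (Q x + 2 * (t * Sp x y) + (t ^+ 2 + 0 ^+ 2) * Q y).
  by apply: mulr_ge0 => //; exact: ltW.
rewrite e; lra.
Qed.

Lemma le_sq (a b : R) : 0 <= b -> a ^+ 2 <= b ^+ 2 -> a <= b.
Proof. move=> hb h; nra. Qed.

Lemma vnormD n (x y : 'cV[C]_n) : vnorm (x + y) <= vnorm x + vnorm y.
Proof.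
apply: le_sq; first by apply: addr_ge0; apply: vnorm_ge0.
rewrite vnorm_sqr QD.
have hx := vnorm_ge0 x; have hy := vnorm_ge0 y.
have h1 : Sp x y <= vnorm x * vnorm y.
  apply: le_sq; first exact: mulr_ge0.
  by rewrite exprMn !vnorm_sqr CS.
have ex := vnorm_sqr x; have ey := vnorm_sqr y.
nra.
Qed.

Lemma vnormZ n (c : C) (x : 'cV[C]_n) :
  vnorm (c *: x) = Num.sqrt (Re c ^+ 2 + Im c ^+ 2) * vnorm x.
Proof. by rewrite !vnormE QZ sqrtrM // addr_ge0 // sqr_ge0. Qed.

Lemma vnormZr n (t : R) (x : 'cV[C]_n) : vnorm (t%:C *: x) = `|t| * vnorm x.
Proof. by rewrite vnormZ ReC ImC expr0n addr0 sqrtr_sqr. Qed.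

Lemma vnormN n (x : 'cV[C]_n) : vnorm (- x) = vnorm x.
Proof.
have -> : - x = (-1)%:C *: x by rewrite rmorphN rmorph1 scaleN1r.
by rewrite vnormZr normrN normr1 mul1r.
Qed.

Lemma vnormB n (x y : 'cV[C]_n) : vnorm (x - y) = vnorm (y - x).
Proof. by rewrite -vnormN opprB. Qed.


Lemma QE n (x : 'cV[C]_n) : Q x = Re ((adj x *m x) 0 0).
Proof.
rewrite !mxE raddf_sum; apply: eq_bigr => i _.
rewrite !mxE; case: (x i 0) => a b /=; ring.
Qed.

Lemma adjM m n p (A : 'M[C]_(m, n)) (B : 'M[C]_(n, p)) : adj (A *m B) = adj B *m adj A.
Proof. by rewrite /adj map_mxM trmx_mul. Qed.

Lemma adjK m n (A : 'M[C]_(m, n)) : adj (adj A) = A.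
Proof. by apply/matrixP => i j; rewrite !mxE conjcK. Qed.

Lemma Q_unitary n (V : 'M[C]_n) (x : 'cV[C]_n) : adj V *m V = 1%:M -> Q (V *m x) = Q x.
Proof. by move=> hV; rewrite !QE adjM mulmxA -(mulmxA (adj x)) hV mulmx1. Qed.

Lemma Q_diag n (f : 'I_n -> R) (x : 'cV[C]_n) : (forall i, f i ^+ 2 <= 1) ->
  Q (diag_mx (\row_i (f i)%:C) *m x) <= Q x.
Proof.
move=> hf; rewrite /Q mul_diag_mx; apply: ler_sum => i _.
rewrite !mxE ReM ImM ReC ImC; have := hf i.
have := sqr_ge0 (Re (x i 0)); have := sqr_ge0 (Im (x i 0)); nra.
Qed.

Lemma adj_unit n (V : 'M[C]_n) : adj V *m V = 1%:M -> V *m adj V = 1%:M.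
Proof. exact: mulmx1C. Qed.

Lemma Fb_contract n (V : 'M[C]_n) (d : 'I_n -> R) lmin b (x : 'cV[C]_n) :
  adj V *m V = 1%:M -> (forall i, lmin <= d i) -> 0 <= b ->
  vnorm (Fb V d lmin b *m x) <= vnorm x.
Proof.
move=> hV hd hb; rewrite !vnormE ler_sqrt ?Q_ge0 //.
rewrite /Fb /fcalc -!mulmxA Q_unitary //.
rewrite -[X in _ <= X](@Q_unitary _ (adj V)); last by rewrite adjK adj_unit.
apply: Q_diag => i.
have h1 : expR (- (b * (d i - lmin))) <= 1.
  rewrite expR_le1 oppr_le0; apply: mulr_ge0 => //; rewrite subr_ge0; exact: hd.
have h0 := expR_ge0 (- (b * (d i - lmin))).
nra.
Qed.

Lemma FbM n (V : 'M[C]_n) (d : 'I_n -> R) lmin b1 b2 :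
  adj V *m V = 1%:M -> Fb V d lmin b1 *m Fb V d lmin b2 = Fb V d lmin (b1 + b2).
Proof.
move=> hV; rewrite /Fb /fcalc.
rewrite -!mulmxA (mulmxA (adj V)) hV mul1mx (mulmxA (diag_mx _)) mulmx_diag.
rewrite !mulmxA.
congr (_ *m _ *m _); congr diag_mx; apply/matrixP => i j.
rewrite !mxE -rmorphM /= -expRD; congr (_%:C); congr expR; ring.
Qed.

Lemma Fb0 n (V : 'M[C]_n) (d : 'I_n -> R) lmin :
  adj V *m V = 1%:M -> Fb V d lmin 0 = 1%:M.
Proof.
move=> hV; rewrite /Fb /fcalc.
have -> : (\row_i (expR (- (0 * (d i - lmin))))%:C) = const_mx (1 : C).
  by apply/matrixP => i j; rewrite !mxE mul0r oppr0 expR0.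
by rewrite diag_const_mx mulmx1 adj_unit.
Qed.

Lemma Fb_inj n (V : 'M[C]_n) (d : 'I_n -> R) lmin b (x : 'cV[C]_n) :
  adj V *m V = 1%:M -> Fb V d lmin b *m x = 0 -> x = 0.
Proof.
move=> hV h.
have : Fb V d lmin (- b) *m (Fb V d lmin b *m x) = 0 by rewrite h mulmx0.
by rewrite mulmxA FbM // addNr Fb0 // mul1mx.
Qed.

Lemma vnorm_sum n I (r : seq I) (F : I -> 'cV[C]_n) :
  vnorm (\sum_(j <- r) F j) <= \sum_(j <- r) vnorm (F j).
Proof.
elim/big_ind2 : _ => //; first by rewrite vnorm0.
move=> x1 x2 y1 y2 h1 h2; apply: le_trans (vnormD _ _) _; exact: lerD.
Qed.

Lemma mulmx_cols m n (M : 'M[C]_(m, n)) (x : 'cV[C]_n) :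
  M *m x = \sum_j (x j 0) *: col j M.
Proof.
apply/matrixP => i k; rewrite ord1 !mxE summxE; apply: eq_bigr => j _.
by rewrite !mxE mulrC.
Qed.

Lemma opnorm_ub m n (M : 'M[C]_(m, n)) :
  has_ubound [set vnorm (M *m x) | x in [set x : 'cV[C]_n | vnorm x = 1]]%classic.
Proof.
exists (\sum_j vnorm (col j M)) => _ [x /= hx <-].
rewrite mulmx_cols; apply: le_trans (vnorm_sum _ _) _.
apply: ler_sum => j _; rewrite vnormZ.
rewrite -[X in _ <= X]mul1r; apply: ler_wpM2r; first exact: vnorm_ge0.
rewrite -sqrtr1 ler_sqrt //.
have : Q x = 1 by rewrite -vnorm_sqr hx expr1n.
rewrite /Q (bigD1 j) //= => <-.
rewrite lerDl; apply: sumr_ge0 => i _; apply: addr_ge0; exact: sqr_ge0.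
Qed.

Lemma vnorm_gt0 n (x : 'cV[C]_n) : x != 0 -> 0 < vnorm x.
Proof.
move=> hx; rewrite lt0r vnorm_ge0 andbT; apply/negP => /eqP h.
by move/eqP: hx; apply; apply: vnorm_eq0.
Qed.

Lemma normalize_norm n (x : 'cV[C]_n) : x != 0 -> vnorm (normalize x) = 1.
Proof.
move=> hx; rewrite /normalize vnormZr.
have hp : 0 < vnorm x.
  exact: vnorm_gt0.
by rewrite ger0_norm ?invr_ge0 ?vnorm_ge0 // mulVf // gt_eqF.
Qed.

Lemma opnorm_bound m n (M : 'M[C]_(m, n)) (x : 'cV[C]_n) :
  vnorm (M *m x) <= opnorm M * vnorm x.
Proof.
have [->|hx] := eqVneq x 0.
  by rewrite mulmx0 !vnorm0 mulr0.
have hp : 0 < vnorm x.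
  exact: vnorm_gt0.
have ex : x = (vnorm x)%:C *: normalize x.
  by rewrite /normalize scalerA -rmorphM /= mulfV ?gt_eqF // scale1r.
rewrite {1}ex -scalemxAr vnormZr ger0_norm ?vnorm_ge0 // mulrC.
apply: ler_wpM2r; first exact: vnorm_ge0.
apply: ub_le_sup; first exact: opnorm_ub.
by exists (normalize x) => //=; rewrite normalize_norm.
Qed.

Lemma normalizeZ n (t : R) (x : 'cV[C]_n) : 0 < t -> normalize (t%:C *: x) = normalize x.
Proof.
move=> ht; rewrite /normalize vnormZr gtr0_norm // scalerA -rmorphM /=.
rewrite invfM mulrAC mulVf ?gt_eqF // mul1r.
by [].
Qed.

Lemma normalize_diff n (y a : 'cV[C]_n) : a != 0 ->
  vnorm (normalize y - normalize a) <= 2 * vnorm (y - a) / vnorm a.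
Proof.
move=> ha.
have hp : 0 < vnorm a.
  exact: vnorm_gt0.
have e : normalize y - normalize a =
   ((vnorm y)^-1 - (vnorm a)^-1)%:C *: y + ((vnorm a)^-1)%:C *: (y - a).
  by rewrite /normalize rmorphB /= scalerBl scalerBr addrA subrK.
rewrite e; apply: le_trans (vnormD _ _) _; rewrite !vnormZr.
rewrite (ger0_norm (x := (vnorm a)^-1)) ?invr_ge0 ?vnorm_ge0 //.
have h2 : `|(vnorm y)^-1 - (vnorm a)^-1| * vnorm y <= vnorm (y - a) / vnorm a.
  have [hy0|hy] := eqVneq (vnorm y) 0.
    by rewrite hy0 mulr0 divr_ge0 ?vnorm_ge0.
  have hyp : 0 < vnorm y by rewrite lt0r hy vnorm_ge0.
  have -> : (vnorm y)^-1 - (vnorm a)^-1 = (vnorm a - vnorm y) / (vnorm y * vnorm a).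
    by field; rewrite hy gt_eqF.
  rewrite normrM (gtr0_norm (x := (vnorm y * vnorm a)^-1)); last by rewrite invr_gt0 mulr_gt0.
  have -> : `|vnorm a - vnorm y| * (vnorm y * vnorm a)^-1 * vnorm y = `|vnorm a - vnorm y| / vnorm a.
    by field; rewrite hy gt_eqF.

  apply: ler_wpM2r; first by rewrite invr_ge0 vnorm_ge0.
  rewrite ler_norml; apply/andP; split.
    have := vnormD (y - a) a; rewrite subrK; lra.
  have := vnormD (a - y) y; rewrite subrK vnormB; lra.
have : vnorm (y - a) / vnorm a = (vnorm a)^-1 * vnorm (y - a) by rewrite mulrC.
lra.
Qed.

Lemma beta_rec (dbeta : nat -> R) l : (1 <= l)%N -> beta dbeta l = beta dbeta l.-1 + dbeta l.
Proof. by case: l => [//|l] _; rewrite /beta big_nat_recr. Qed.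


Lemma A_contract n (V : 'M[C]_n) d lmin b (al : R) (x : 'cV[C]_n) :
  adj V *m V = 1%:M -> (forall i, lmin <= d i) -> 0 <= b -> 0 < al -> al <= 1 ->
  vnorm ((al%:C *: Fb V d lmin b) *m x) <= vnorm x.
Proof.
move=> hV hd hb ha0 ha1.
rewrite -scalemxAl.
rewrite vnormZr.
rewrite gtr0_norm //.
apply: le_trans _ (Fb_contract x hV hd hb).
rewrite -[X in _ <= X]mul1r; apply: ler_wpM2r => //; exact: vnorm_ge0.
Qed.
End S.

Theorem lemma9 (R : realType) :
  exists K c : R, 0 < c /\
  forall (n m : nat) (H V : 'M[R[i]]_n) (d : 'I_n -> R) (lmin : R),
    unitary_mx V -> H = fcalc V d id -> opnorm H <= 1 ->
    (exists i, d i = lmin) -> (forall i, lmin <= d i) ->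
  forall Psi : 'cV[R[i]]_n, vnorm Psi = 1 ->
  forall (r : nat) (dbeta alpha : nat -> R),
    (forall k, (1 <= k <= r)%N -> 0 < dbeta k) ->
    (forall k, (1 <= k <= r)%N -> 0 < alpha k <= 1) ->
  forall l : nat, (1 <= l <= r)%N ->
  forall (Xi_prev : 'cV[R[i]]_n) (U : 'M[R[i]]_(n * m)) (z : 'cV[R[i]]_m),
    unitary_mx U -> vnorm z = 1 ->
  forall eps_l : R,
  let Psi_prev := normalize (Fb V d lmin (beta dbeta l.-1) *m Psi) in
  let Psi_l := normalize (Fb V d lmin (beta dbeta l) *m Psi) in
  let A := (alpha l)%:C *: Fb V d lmin (dbeta l) in
  let eps_prev := vnorm Xi_prev in
  let eps'_l := opnorm (block U z - A) in
  let Psi_tilde_l := normalize (block U z *m (Psi_prev + Xi_prev)) in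
  let Xi_l := Psi_tilde_l - Psi_l in
    eps_prev + eps'_l <= eps_l * vnorm (A *m Psi_prev) / 2 ->
    eps_l <= c ->
    vnorm Xi_l <= K * eps_l.
Proof.
exists 2, 1; split => //.
move=> n m H V d lmin hV _ _ _ hd Psi hPsi r dbeta alpha hdb hal l hl Xi U z _ _ eps
  Psi_prev Psi_l A e e' Psi_t Xi_l hyp hc.
have hl1 : (1 <= l)%N by case/andP: hl.
have hdl : 0 < dbeta l by apply: hdb.
have /andP [ha0 ha1] : 0 < alpha l <= 1 by apply: hal.
have hPsi0 : Psi != 0 by apply/eqP => h; move: hPsi; rewrite h vnorm0 => /eqP; rewrite eq_sym oner_eq0.
set P := Fb V d lmin (beta dbeta l.-1) *m Psi.
set G := Fb V d lmin (beta dbeta l) *m Psi.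
have hP0 : P != 0 by apply/eqP => /(Fb_inj hV) h; rewrite h eqxx in hPsi0.
have hG0 : G != 0 by apply/eqP => /(Fb_inj hV) h; rewrite h eqxx in hPsi0.
have hvP := vnorm_gt0 hP0.
have hPp : vnorm Psi_prev = 1 := normalize_norm hP0.
have hAc : forall x, vnorm (A *m x) <= vnorm x.
  by move=> x; apply: A_contract => //; apply: ltW.
set a := A *m Psi_prev.
have ea : a = (alpha l / vnorm P)%:C *: G.
  rewrite /a /A /Psi_prev /normalize -/P -scalemxAl -scalemxAr scalerA -rmorphM /=.
  by rewrite mulmxA FbM // addrC -beta_rec.
have han : a != 0.
  have hs : 0 < alpha l / vnorm P by apply: divr_gt0.
  apply/eqP => h; have := vnorm_gt0 hG0.
  have : vnorm a = 0 by rewrite h vnorm0.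
  rewrite ea vnormZr gtr0_norm // => /eqP; rewrite mulf_eq0 (gt_eqF hs) /= => /eqP ->.
  by rewrite ltxx.
have hna : normalize a = Psi_l by rewrite ea normalizeZ // divr_gt0.
have hw := vnorm_gt0 han.
have hw1 : vnorm a <= 1 by rewrite -hPp; apply: hAc.
set y := block U z *m (Psi_prev + Xi).
have ey : y - a = (block U z - A) *m (Psi_prev + Xi) + A *m Xi.
  by rewrite /y /a mulmxBl (mulmxDr A) opprD addrA subrK.
have he' : 0 <= e'.
  have := opnorm_bound (block U z - A) Psi_prev; rewrite hPp mulr1.
  by apply: le_trans; apply: vnorm_ge0.
have he : 0 <= e by apply: vnorm_ge0.
have hv : vnorm (y - a) <= e' * (1 + e) + e.
  rewrite ey; apply: le_trans (vnormD _ _) _; apply: lerD; last exact: hAc.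
  apply: le_trans (opnorm_bound _ _) _; apply: ler_wpM2l => //.
  by apply: le_trans (vnormD _ _) _; rewrite hPp.
have hX : vnorm Xi_l <= 2 * vnorm (y - a) / vnorm a.
  by rewrite /Xi_l /Psi_t -hna; apply: normalize_diff.
apply: le_trans hX _.
rewrite ler_pdivrMr //.
have hvp := vnorm_ge0 (y - a).
set w := vnorm a in hw hw1 hyp *.
have hew0 : 0 <= eps * w by lra.
have heps : 0 <= eps by move: hew0; rewrite pmulr_lge0.
have hew : eps * w <= 1 by have := ler_pM heps (ltW hw) hc hw1; rewrite mul1r.
have he1 : e <= 1 / 2 by lra.
have hee : e' * e <= e' * (1 / 2) by apply: ler_wpM2l.
rewrite mulrDr mulr1 in hv.
set ew := eps * w in hew0 hew hyp *.
rewrite -mulrA -/ew.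
set ee := e' * e in hee hv.
lra.
Qed.
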